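(* Consider the following hybrid sealed-bid auction for a single item. There are $n_A$ ''integrated'' bidders and $n > 1$ ''non-integrated'' bidders, each bidder having a private value drawn independently from the uniform distribution on $[0,1]$. All bidders simultaneously submit bids and the highest bidder wins. If the winner is integrated, it pays the second-highest bid; if the winner is non-integrated, it pays its own bid. Suppose every integrated bidder bids its true value, and let $\sigma_n(\cdot)$ be a strictly increasing symmetric Bayes–Nash equilibrium bidding strategy of the non-integrated bidders. Then for all $v \in [0,1]$, $$\frac{n_A}{n_A+1}\, v \le \sigma_n(v) \le v.$$
   Context: Bidders are risk neutral with quasilinear utility (value minus payment if winning, zero otherwise). *)

(* Defs.v *)
From HB Require Import structures.
From mathcomp Require Import all_boot all_order all_algebra.
From mathcomp Require Import all_classical all_reals all_analysis.
Set Implicit Arguments. Unset Strict Implicit. Unset Printing Implicit Defensive.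
Import Order.TTheory GRing.Theory Num.Theory.
Local Open Scope classical_set_scope.
Local Open Scope ring_scope.

(* Probability that a value V ~ Uniform[0,1] lies in A:
   the Lebesgue measure of A ∩ [0,1]. *)
Definition unif_prob (R : realType) (A : set R) : R :=
  fine (@lebesgue_measure R (A `&` [set x | 0 <= x <= 1])).

(* Probability that a bid b strictly exceeds the bids of all other bidders,
   from the point of view of a non-integrated bidder, when the nA integrated
   bidders bid their values and the other n-1 non-integrated bidders use sigma
   (values i.i.d. uniform on [0,1]).  Ties have probability zero when sigma is
   strictly increasing, so the tie-breaking rule is irrelevant. *)
Definition win_prob (R : realType) (nA n : nat) (sigma : R -> R) (b : R) : R :=
  (unif_prob [set x | x < b]) ^+ nA * (unif_prob [set x | sigma x < b]) ^+ n.-1.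

Definition ni_utility (R : realType) (nA n : nat) (sigma : R -> R) (v b : R) : R :=
  (v - b) * win_prob nA n sigma b.

Definition strictly_increasing_on01 (R : realType) (sigma : R -> R) : Prop :=
  forall x y : R, 0 <= x -> x < y -> y <= 1 -> sigma x < sigma y.

Definition ni_symmetric_BNE (R : realType) (nA n : nat) (sigma : R -> R) : Prop :=
  (forall v : R, 0 <= v <= 1 -> 0 <= sigma v) /\
  (forall v b : R, 0 <= v <= 1 -> 0 <= b ->
     ni_utility nA n sigma v b <= ni_utility nA n sigma v (sigma v)).

(* Main.v *)
Require Import Defs.
From HB Require Import structures.
From mathcomp Require Import all_boot all_order all_algebra.
From mathcomp Require Import all_classical all_reals all_analysis.
From mathcomp Require Import ring lra.
Import Order.TTheory GRing.Theory Num.Theory.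
Set Implicit Arguments. Unset Strict Implicit.
Local Open Scope ring_scope.
Local Open Scope classical_set_scope.

Lemma leb_mono (R : realType) (A B : set R) : A `<=` B ->
  (@lebesgue_measure R A <= lebesgue_measure B)%E.
Proof. move=> AB; rewrite /lebesgue_measure /lebesgue_stieltjes_measure /measure_extension. by apply: le_mu_ext. Qed.

Lemma I01E (R : realType) : [set x : R | 0 <= x <= 1] = [set` `[0, 1]%R].
Proof. by apply/seteqP; split => x /=; rewrite in_itv. Qed.

Lemma up_fin (R : realType) (A : set R) :
  (0 <= @lebesgue_measure R (A `&` [set x : R | (0 <= x <= 1)%R]) <= 1%:E)%E.
Proof.
apply/andP; split; first exact: measure_ge0.
have h := @leb_mono R _ _ (@subIsetr _ A [set x : R | (0 <= x <= 1)%R]).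
apply: (le_trans h).
by rewrite I01E lebesgue_measure_itv /= lte_fin ltr01 oppr0 adde0.
Qed.

Lemma up_bnd (R : realType) (A : set R) : 0 <= unif_prob A <= 1.
Proof.
have /andP[h0 h1] := @up_fin R A.
have fA : @lebesgue_measure R (A `&` [set x : R | (0 <= x <= 1)%R]) \is a fin_num.
  by rewrite ge0_fin_numE// (le_lt_trans h1) ?ltry.
rewrite /unif_prob; apply/andP; split; first exact: fine_ge0.
by rewrite -lee_fin fineK.
Qed.

Lemma up_mono (R : realType) (A B : set R) :
  (forall x, 0 <= x <= 1 -> A x -> B x) -> unif_prob A <= unif_prob B.
Proof.
move=> AB.
have /andP[a0 a1] := @up_fin R A; have /andP[b0 b1] := @up_fin R B.
rewrite /unif_prob fine_le//.
- by rewrite ge0_fin_numE// (le_lt_trans a1) ?ltry.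
- by rewrite ge0_fin_numE// (le_lt_trans b1) ?ltry.
by apply: leb_mono => x [Ax Ix]; split => //; apply: AB.
Qed.

Lemma up_lt (R : realType) (b : R) : 0 <= b <= 1 -> unif_prob [set x | x < b] = b.
Proof.
move=> /andP[b0 b1]; rewrite /unif_prob.
have -> : [set x : R | x < b] `&` [set x : R | 0 <= x <= 1] = [set` `[0, b[%R].
  apply/seteqP; split => x /=; rewrite in_itv /=.
    by move=> [xb /andP[-> _]].
  move=> /andP[x0 xb]; split => //; rewrite x0 /=.
  exact: ltW (lt_le_trans xb b1).
rewrite lebesgue_measure_itv /=.
case: ifPn => [_|]; first by rewrite sube0.
by rewrite lte_fin -leNgt => bl; apply/eqP; rewrite eq_le b0 bl.
Qed.

Lemma up0 (R : realType) (A : set R) : (forall x, 0 <= x <= 1 -> ~ A x) -> unif_prob A = 0.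
Proof.
move=> hA; rewrite /unif_prob; have -> : A `&` [set x : R | 0 <= x <= 1] = set0.
  by apply/seteqP; split => x //= [] /[swap] /hA.
by rewrite measure0.
Qed.

Lemma D_pos (R : realFieldType) (m : nat) (b s : R) : 0 <= s -> s < b -> (0 < m)%N ->
  0 < b ^+ m.+1 + m%:R * s ^+ m.+1 - (m.+1)%:R * b * s ^+ m.
Proof.
move=> s0 sb; elim: m => [//|m IH _].
have b0 : 0 < b by apply: le_lt_trans sb.
case: m IH => [_|m IH].
  rewrite !expr1 !expr2.
  have : 0 < (b - s) ^+ 2 by rewrite exprn_gt0 // subr_gt0.
  by rewrite expr2 => h; apply: (lt_le_trans h); rewrite le_eqVlt; apply/orP; left; apply/eqP; ring.
have H := IH isT.
have e : b ^+ m.+3 + (m.+2)%:R * s ^+ m.+3 - (m.+3)%:R * b * s ^+ m.+2 =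
  b * (b ^+ m.+2 + (m.+1)%:R * s ^+ m.+2 - (m.+2)%:R * b * s ^+ m.+1)
  + (m.+2)%:R * s ^+ m.+1 * (b - s) ^+ 2.
  rewrite !(exprS b) !(exprS s) !expr2; ring.
rewrite e; apply: (lt_le_trans (mulr_gt0 b0 H)); rewrite lerDl.
apply: mulr_ge0; last exact: sqr_ge0.
by apply: mulr_ge0 => //; apply: exprn_ge0.
Qed.

Theorem mainTheorem3 (R : realType) (nA n : nat) (sigma : R -> R) :
  (1 < n)%N ->
  strictly_increasing_on01 sigma ->
  ni_symmetric_BNE nA n sigma ->
  forall v : R, 0 <= v <= 1 ->
    (nA%:R / (nA%:R + 1)) * v <= sigma v /\ sigma v <= v.
Proof.
move=> n1 inc [sig0 bne].
have n10 : (0 < n.-1)%N by rewrite -subn1 subn_gt0.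
set F := fun b => unif_prob [set x | sigma x < b].
have Fmono : forall b c, b <= c -> F b <= F c.
  move=> b c bc; apply: up_mono => x _ /= h; exact: lt_le_trans bc.
have F0 : forall b, 0 <= F b by move=> b; have /andP[] := @up_bnd R [set x | sigma x < b].
have Fv : forall w, 0 <= w <= 1 -> w <= F (sigma w).
  move=> w wI; rewrite -{1}(up_lt wI); apply: up_mono => x /andP[x0 x1] /= xw.
  by apply: inc => //; case/andP: wI.
have Fz : F 0 = 0.
  apply: up0 => x xI /=; apply/negP; rewrite -leNgt; exact: sig0.
have ubpos : forall w, 0 < w <= 1 -> sigma w <= w.
  move=> w /andP[wpos w1]; have wI : 0 <= w <= 1 by rewrite ltW.
  rewrite leNgt; apply/negP => ws.
  have := bne w 0 wI (lexx 0).
  rewrite /ni_utility /win_prob -/(F 0) Fz expr0n gtn_eqF // mulr0 mulr0.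
  apply/negP; rewrite -ltNge nmulr_rlt0 ?subr_lt0 //.
  apply: mulr_gt0; apply: exprn_gt0.
    apply: (lt_le_trans wpos); rewrite -{1}(up_lt wI); apply: up_mono => x _ /= xw.
    exact: lt_trans ws.
  exact: lt_le_trans wpos (Fv w wI).
move=> v /andP[v0 v1]; have vI : 0 <= v <= 1 by rewrite v0 v1.
have ub : sigma v <= v.
  case: (ltrP 0 v) => [vpos|vle]; first by apply: ubpos; rewrite vpos.
  have ve : v = 0 by apply/eqP; rewrite eq_le vle v0.
  rewrite ve leNgt; apply/negP => s0pos.
  set x := Num.min (sigma 0) 1 / 2.
  have xpos : 0 < x by rewrite divr_gt0 // lt_min s0pos ltr01.
  have x1 : x <= 1.
    rewrite /x ler_pdivrMr // ge_min; apply/orP; right.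
    by rewrite mul1r ler1n.
  have := inc 0 x (lexx 0) xpos x1.
  have := ubpos x; rewrite xpos x1 => /(_ isT) sx.
  move=> h; have := lt_le_trans h sx.
  rewrite /x; apply/negP; rewrite -leNgt ler_pdivrMr // ge_min; apply/orP; left.
  by rewrite ler_pMr // ler1n.
split => //.
rewrite leNgt; apply/negP => hs.
have s0 := sig0 v vI.
case: (posnP nA) => [m0|mpos].
  by move: hs; rewrite m0 (_ : 0%:R = 0) // !mul0r => h; have := lt_le_trans h s0; rewrite ltxx.
have vpos : 0 < v.
  rewrite lt_neqAle v0 andbT; apply/negP => /eqP ve.
  by move: hs s0; rewrite -ve mulr0 => h s0; have := lt_le_trans h s0; rewrite ltxx.
set k := nA%:R / (nA%:R + 1) in hs.
set b := k * v in hs.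
set s := sigma v in hs s0 ub.
have k0 : 0 <= k by rewrite divr_ge0 // addr_ge0.
have k1 : k <= 1 by rewrite ler_pdivrMr ?mul1r ?lerDl // ltr_wpDl.
have b0 : 0 <= b by rewrite mulr_ge0.
have bv : b <= v by apply: ler_piMl.
have bI : 0 <= b <= 1 by rewrite b0 (le_trans bv).
have sI : 0 <= s <= 1 by rewrite s0 (le_trans ub).
have hb1 : nA%:R * v = (nA.+1)%:R * b.
  rewrite /b /k -natr1; field.
  by rewrite natr1 pnatr_eq0.
have := bne v b vI b0.
rewrite /ni_utility /win_prob (up_lt bI) (up_lt sI) -/(F b) -/(F s).
have cpos : 0 < F s ^+ n.-1 by apply: exprn_gt0; exact: lt_le_trans vpos (Fv v vI).
have Fbs : F s ^+ n.-1 <= F b ^+ n.-1.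
  by apply: lerXn2r; rewrite ?nnegrE ?F0 // Fmono // ltW.
move=> h.
have h2 : (v - b) * b ^+ nA * F s ^+ n.-1 <= (v - s) * s ^+ nA * F s ^+ n.-1.
  rewrite -/s in h; rewrite -mulrA -[X in _ <= X]mulrA.
  apply: (le_trans _ h); apply: ler_wpM2l; first by rewrite subr_ge0.
  by apply: ler_wpM2l => //; apply: exprn_ge0.
rewrite ler_pM2r // in h2.
have := D_pos s0 hs mpos.
have -> : b ^+ nA.+1 + nA%:R * s ^+ nA.+1 - (nA.+1)%:R * b * s ^+ nA =
   nA%:R * ((v - b) * b ^+ nA - (v - s) * s ^+ nA).
  have e : nA%:R * ((v - b) * b ^+ nA - (v - s) * s ^+ nA) =
    (nA%:R * v) * b ^+ nA - nA%:R * b ^+ nA.+1 - (nA%:R * v) * s ^+ nA + nA%:R * s ^+ nA.+1.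
    by rewrite !exprS; ring.
  by rewrite e hb1 !exprS -natr1; ring.
rewrite pmulr_rgt0 ?ltr0n // subr_gt0 ltNge h2 //.
Qed.
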